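(* Let $G$ be a connected graph of order $n$ with maximum degree $\Delta$, and let $k\ge\chi(G)$ be an integer. Then $\mathrm{sn}(G,k)=n$ if and only if $k>\Delta+1$. Also, $\underline{\mathrm{lcs}}(G,k)=n$ if and only if $k>\Delta+1$.
   Context: All graphs are finite and simple. For a graph $G=(V,E)$ and an integer $k\ge\chi(G)$, a proper $k$-colouring is a map $c:V\to[k]$ with $c(u)\neq c(v)$ for every edge $uv$. A set $S\subseteq V$ is a determining set for $(G,c)$ if there is no proper $k$-colouring $c'\neq c$ of $G$ with $c'(s)=c(s)$ for all $s\in S$. A critical set for $(G,c)$ is an inclusion-minimal determining set. $\mathrm{scs}(G,c)$ and $\mathrm{lcs}(G,c)$ are the sizes of a smallest resp. largest critical set for $(G,c)$. $\mathrm{sn}(G,k)$ is the minimum of $\mathrm{scs}(G,c)$ over all proper $k$-colourings $c$ (equivalently the minimum number of vertices coloured in a partial colouring having a unique extension to a proper $k$-colouring), and $\underline{\mathrm{lcs}}(G,k)$ is the minimum of $\mathrm{lcs}(G,c)$ over all proper $k$-colourings $c$. *)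

(* Defs.v *)
From mathcomp Require Import all_boot.
Set Implicit Arguments. Unset Strict Implicit. Unset Printing Implicit Defensive.

Section Graphs.
Variable T : finType.
Variable e : rel T.

Definition simple_graph : Prop := symmetric e /\ irreflexive e.

Definition connected_graph : Prop := forall x y : T, connect e x y.

Definition degree (x : T) : nat := #|[set y | e x y]|.

Definition max_degree : nat := \max_(x : T) degree x.

Definition proper_col (k : nat) (c : {ffun T -> 'I_k}) : bool :=
  [forall x, forall y, e x y ==> (c x != c y)].

Definition colourable (k : nat) : bool :=
  [exists c : {ffun T -> 'I_k}, proper_col c].

(* chromatic number: least k admitting a proper k-colouring
   (a loopless graph is always #|T|-colourable, so the range k <= #|T| suffices) *)
Definition chi : nat := \big[minn/#|T|]_(k < #|T|.+1 | colourable k) k.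

Section Colouring.
Variable k : nat.
Variable c : {ffun T -> 'I_k}.

Definition determining (S : {set T}) : bool :=
  [forall c' : {ffun T -> 'I_k},
     (proper_col c' && [forall s in S, c' s == c s]) ==> (c' == c)].

Definition critical (S : {set T}) : bool :=
  determining S && [forall S' : {set T}, (S' \proper S) ==> ~~ determining S'].

(* smallest / largest size of a critical set (critical sets exist since
   setT is determining; all sizes are <= #|T|) *)
Definition scs : nat := \big[minn/#|T|]_(S : {set T} | critical S) #|S|.
Definition lcs : nat := \max_(S : {set T} | critical S) #|S|.
End Colouring.

Definition sn (k : nat) : nat :=
  \big[minn/#|T|]_(c : {ffun T -> 'I_k} | proper_col c) scs c.
Definition lcs_low (k : nat) : nat :=
  \big[minn/#|T|]_(c : {ffun T -> 'I_k} | proper_col c) lcs c.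
End Graphs.

(* Main.v *)
Require Import Defs.
From mathcomp Require Import all_boot zify.
Set Implicit Arguments. Unset Strict Implicit. Unset Printing Implicit Defensive.

Section S.
Variable T : finType.
Variable e : rel T.
Hypothesis He : simple_graph e.

Lemma esym x y : e x y -> e y x.
Proof. by case: He => s _; rewrite s. Qed.
Lemma eneq x y : e x y -> x != y.
Proof. by case: He => _ i; apply: contraTneq => ->; rewrite i. Qed.

Lemma bigmin_le (I : finType) (P : pred I) (F : I -> nat) a i0 :
  P i0 -> \big[minn/a]_(i | P i) F i <= F i0.
Proof.
move=> Pi0; rewrite -big_filter.
have : i0 \in [seq i <- index_enum I | P i] by rewrite mem_filter Pi0 mem_index_enum.
elim: [seq i <- index_enum I | P i] => [//|x r IH]; rewrite big_cons inE.
case/orP=> [/eqP<-|/IH H]; first exact: geq_minl.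
exact: leq_trans (geq_minr _ _) H.
Qed.

Lemma bigmin_const (I : finType) (P : pred I) (F : I -> nat) a :
  (forall i, P i -> F i = a) -> \big[minn/a]_(i | P i) F i = a.
Proof.
move=> H; apply: (big_ind (fun m => m = a)) => //; first by move=> x y -> ->; rewrite minnn.
Qed.

Section K.
Variable k : nat.

Lemma det_setT (c : {ffun T -> 'I_k}) : determining e c setT.
Proof.
apply/forallP=> c'; apply/implyP=> /andP[_ /forallP H]; apply/eqP/ffunP=> x.
by apply/eqP; move: (H x); rewrite in_setT.
Qed.

Lemma det_sub (c : {ffun T -> 'I_k}) (S S' : {set T}) : S \subset S' -> determining e c S -> determining e c S'.
Proof.
move=> sub /forallP D; apply/forallP=> c'; apply/implyP=> /andP[pc /forallP H].
move/implyP: (D c'); apply; rewrite pc /=; apply/forallP=> s; apply/implyP=> sS.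
by move/implyP: (H s); apply; apply: (subsetP sub).
Qed.

Definition witness (c : {ffun T -> 'I_k}) x :=
  [forall j : 'I_k, (j != c x) ==> [exists y, e x y && (c y == j)]].

Lemma witness_det c x : witness c x -> determining e c (setT :\ x).
Proof.
move=> /forallP W; apply/forallP=> c'; apply/implyP=> /andP[/forallP pc /forallP H].
have Hy y : y != x -> c' y = c y.
  by move=> yx; apply/eqP; move/implyP: (H y); apply; rewrite !inE yx.
apply/eqP/ffunP=> y; case: (eqVneq y x) => [->|yx]; last exact: Hy.
apply/eqP; apply/negPn/negP=> ne.
move/implyP: (W (c' x)); rewrite ne => /(_ isT) /existsP[z /andP[exz /eqP czx]].
move: (pc x) => /forallP /(_ z) /implyP /(_ exz).
rewrite (Hy z) ?czx ?eqxx //; rewrite eq_sym; exact: eneq exz.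
Qed.

Lemma crit_small c x (S : {set T}) : witness c x -> critical e c S -> #|S| < #|T|.
Proof.
move=> W; rewrite /critical => /andP[_ /forallP C]; rewrite ltn_neqAle max_card andbT.
apply/negP=> /eqP cS.
have ST : S = [set: T].
  apply/eqP. rewrite eqEcard. rewrite subsetT. rewrite cardsT. by rewrite cS leqnn.
move/implyP: (C (setT :\ x)); rewrite ST properD1 ?in_setT // => /(_ isT).
by rewrite witness_det.
Qed.

Lemma lcs_small c x : witness c x -> lcs e c < #|T|.
Proof.
move=> W; have pos : 0 < #|T| by apply/card_gt0P; exists x.
rewrite -(prednK pos) ltnS; apply/bigmax_leqP=> S cS.
by rewrite -ltnS prednK // (crit_small W cS).
Qed.

Definition nbh v := [set y | e v y].
Definition seen (c : {ffun T -> 'I_k}) v : {set 'I_k} := [set c y | y in nbh v].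

Lemma seen_le c v : #|seen c v| <= k.
Proof. by rewrite -[k in _ <= k]card_ord max_card. Qed.

Definition miss (c : {ffun T -> 'I_k}) x : 'I_k :=
  odflt (c x) [pick j' | (j' != c x) && [forall y, e x y ==> (c y != j')]].

Lemma missP c x : ~~ witness c x -> miss c x != c x /\ forall y, e x y -> c y != miss c x.
Proof.
move=> /forallPn[j']; rewrite negb_imply => /andP[jx /existsPn nj].
rewrite /miss; case: pickP => [j0 /andP[j0x /forallP F]|/(_ j')].
  by split=> // y exy; move/implyP: (F y); apply.
rewrite jx /=; move/negbT/forallPn=> [y]; rewrite negb_imply negbK => /andP[exy cyj].
by move: (nj y); rewrite exy cyj.
Qed.

Lemma step c v : proper_col e c -> k <= (degree e v).+1 -> ~~ witness c v ->
  (exists x, witness c x) \/ exists c2, proper_col e c2 /\ #|seen c v| < #|seen c2 v|.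
Proof.
move=> pc dv /forallPn[j]; rewrite negb_imply => /andP[jv /existsPn nj].
have pc' x y : e x y -> c x != c y by move=> exy; move/forallP: pc => /(_ x) /forallP /(_ y) /implyP; apply.
case: (boolP [exists x, (c x == j) && witness c x]) => [/existsP[x /andP[_ W]]|NW]; first by left; exists x.
right.
have Hm x : c x == j -> miss c x != c x /\ forall y, e x y -> c y != miss c x.
  move=> cxj; apply: missP; apply/negP=> W; move/existsP: NW; apply; exists x; by rewrite cxj W.
pose c1 := [ffun x => if c x == j then miss c x else c x].
have c1j x : c1 x != j.
  rewrite /c1 ffunE; case: ifP => [/eqP cxj|/negbT //]; by case: (Hm x (introT eqP cxj)) => H _; rewrite -cxj.
have c1c x : c x != j -> c1 x = c x by move=> H; rewrite /c1 ffunE (negbTE H).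
have pc1 : proper_col e c1.
  apply/forallP=> x; apply/forallP=> y; apply/implyP=> exy; rewrite /c1 !ffunE.
  case: ifP => [cxj|cxj]; case: ifP => [cyj|cyj].
  - by move: (pc' x y exy); rewrite (eqP cxj) (eqP cyj) eqxx.
  - by case: (Hm x cxj) => _ /(_ y exy); rewrite eq_sym.
  - by case: (Hm y cyj) => _ /(_ x (esym exy)).
  - exact: pc' x y exy.
clearbody c1.
have jseen : j \notin seen c v.
  apply/imsetP=> [[y]]; rewrite inE => evy cyj; by move: (nj y); rewrite evy cyj eqxx.
have vseen : c v \notin seen c v.
  apply/imsetP=> [[y]]; rewrite inE => evy cyj; by move: (pc' v y evy); rewrite cyj eqxx.
have small : #|seen c v| < #|nbh v|.
  have sub : seen c v \subset ~: [set j; c v].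
    apply/subsetP=> a aS; rewrite !inE; apply/negP=> /orP[/eqP E|/eqP E].
      by move: jseen; rewrite -E aS.
    by move: vseen; rewrite -E aS.
  have H1 := subset_leq_card sub; have H2 := cardsC [set j; c v].
  rewrite cards2 jv card_ord /= in H2.
  have H3 : #|seen c v| + 2 <= k by apply: (leq_trans _ (eq_leq H2)); rewrite addnC leq_add2l.
  move: dv H3; rewrite /degree -/(nbh v). lia.
have : [exists u, exists u', [&& u \in nbh v, u' \in nbh v, u != u' & c u == c u']].
  apply: contraT => /existsPn N.
  have inj : {in nbh v &, injective c}.
    move=> a b Na Nb cab; apply/eqP; apply/negPn/negP => ab.
    by move: (N a) => /existsPn /(_ b); rewrite Na Nb ab cab eqxx.
  by move: small; rewrite /seen (card_in_imset inj) ltnn.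
move=> /existsP[u /existsP[u' /and4P[Nu Nu' uu' /eqP cuu']]].
have cnj y : y \in nbh v -> c y != j.
  by rewrite inE => evy; apply/negP=> cyj; move: (nj y); rewrite evy cyj.
pose c2 := [ffun x => if x == u then j else c1 x].
exists c2; split.
  apply/forallP=> x; apply/forallP=> y; apply/implyP=> exy; rewrite /c2 !ffunE.
  case: ifP => [/eqP xu|xu]; case: ifP => [/eqP yu|yu].
  - by move: (eneq exy); rewrite xu yu eqxx.
  - by rewrite eq_sym c1j.
  - exact: c1j.
  - by move/forallP: pc1 => /(_ x) /forallP /(_ y) /implyP; apply.
have sub : j |: seen c v \subset seen c2 v.
  apply/subsetP=> a; rewrite in_setU1 => /orP[/eqP ->|/imsetP[y Ny ->]].
    by apply/imsetP; exists u => //; rewrite ffunE eqxx.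
  case: (eqVneq y u) => [yu|yu].
    apply/imsetP; exists u' => //; rewrite ffunE eq_sym (negbTE uu') c1c ?cnj //.
    by rewrite yu cuu'.
  by apply/imsetP; exists y => //; rewrite ffunE (negbTE yu) c1c ?cnj.
apply: (leq_trans _ (subset_leq_card sub)).
by rewrite cardsU1 jseen.
Qed.

Lemma exists_witness (c : {ffun T -> 'I_k}) v : proper_col e c -> k <= (degree e v).+1 ->
  exists c' x, proper_col e c' /\ witness c' x.
Proof.
move=> pc dv.
suff H : forall m (c : {ffun T -> 'I_k}), proper_col e c -> k - #|seen c v| <= m ->
  exists c' x, proper_col e c' /\ witness c' x by exact: (H _ c pc (leqnn _)).
elim=> [|m IH] c0 pc0 hm; (case: (boolP (witness c0 v)) => [W|NW]; first by exists c0, v);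
  (case: (step pc0 dv NW) => [[x W]|[c2 [pc2 lt]]]; first by exists c0, x);
  have := seen_le c2 v.
- lia.
- move=> le; apply: (IH c2 pc2); lia.
Qed.

Lemma det_full (c : {ffun T -> 'I_k}) (S : {set T}) : proper_col e c -> (max_degree e).+2 <= k ->
  determining e c S -> S = [set: T].
Proof.
move=> pc kD /forallP D; apply/setP => x; rewrite in_setT; apply: contraT => xS.
pose C := c x |: seen c x.
have cC : #|C| < k.
  apply: leq_trans kD; rewrite ltnS; apply: (leq_trans (leq_card_setU _ _)).
  rewrite cards1 add1n ltnS; apply: (leq_trans (leq_imset_card _ _)).
  rewrite /max_degree; apply: (leq_trans _ (@leq_bigmax _ (degree e) x)); by rewrite /degree.
have : ~~ ([set: 'I_k] \subset C).
  by apply/negP=> /subset_leq_card; rewrite cardsT card_ord leqNgt cC.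
move=> /subsetPn[j _ jC].
pose c' := [ffun y => if y == x then j else c y].
have pc' x0 y : e x0 y -> c x0 != c y by move=> exy; move/forallP: pc => /(_ x0) /forallP /(_ y) /implyP; apply.
have jn y : e x y -> c y != j.
  move=> exy; apply/negP=> /eqP cyj; move: jC; rewrite !inE negb_or => /andP[_ /imsetP]; apply.
  by exists y; rewrite ?inE.
have jx : c x != j by apply/negP=> /eqP E; move: jC; rewrite !inE E eqxx.
move/implyP: (D c').
have -> : proper_col e c'.
  apply/forallP=> y; apply/forallP=> z; apply/implyP=> eyz; rewrite /c' !ffunE.
  case: ifP => [/eqP yx|yx]; case: ifP => [/eqP zx|zx].
  - by move: (eneq eyz); rewrite yx zx eqxx.
  - by rewrite eq_sym jn // -yx.
  - by apply: jn; rewrite -zx esym.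
  - exact: pc'.
have -> : [forall s in S, c' s == c s].
  apply/forallP=> s; apply/implyP=> sS; rewrite ffunE; case: ifP => // /eqP sx.
  by move: xS; rewrite -sx sS.
move=> /(_ isT) /eqP /ffunP /(_ x); rewrite ffunE eqxx => E.
by move: jx; rewrite -E eqxx.
Qed.

Lemma setT_critical (c : {ffun T -> 'I_k}) : proper_col e c -> (max_degree e).+2 <= k -> critical e c [set: T].
Proof.
move=> pc kD; rewrite /critical det_setT /=; apply/forallP=> S'; apply/implyP=> pS.
apply/negP=> /(det_full pc kD) E; by move: pS; rewrite E properxx.
Qed.

Lemma exists_critical (c : {ffun T -> 'I_k}) : exists S, critical e c S.
Proof.
have [A mA] : {A | minset (determining e c) A} by apply: ex_minset; exists [set: T]; exact: det_setT.
exists A; rewrite /critical (minsetp mA) /=; apply/forallP=> B; apply/implyP=> pB.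
apply/negP=> DB; have E := minsetinf mA DB (proper_sub pB).
by move: pB; rewrite E properxx.
Qed.

Lemma col_mono m : m <= k -> colourable e m -> colourable e k.
Proof.
move=> mk /existsP[c pc]; apply/existsP; exists [ffun x => widen_ord mk (c x)].
apply/forallP=> x; apply/forallP=> y; apply/implyP=> exy; rewrite !ffunE.
rewrite -val_eqE /= val_eqE.
by move/forallP: pc => /(_ x) /forallP /(_ y) /implyP; apply.
Qed.
End K.

Lemma colourable_n : colourable e #|T|.
Proof.
apply/existsP; exists [ffun x => enum_rank x].
apply/forallP=> x; apply/forallP=> y; apply/implyP=> exy; rewrite !ffunE.
by rewrite (inj_eq enum_rank_inj); apply: eneq.
Qed.

Lemma chi_col : colourable e (chi e).
Proof.
apply: (big_ind (fun m => colourable e m)); first exact: colourable_n.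
  by move=> a b Ha Hb; rewrite /minn; case: ifP.
by [].
Qed.
End S.

Unset Implicit Arguments.
Theorem theorem4 (T : finType) (e : rel T) (k : nat) :
  simple_graph e -> connected_graph e -> 0 < #|T| -> chi e <= k ->
  (sn e k = #|T| <-> max_degree e + 1 < k) /\
  (lcs_low e k = #|T| <-> max_degree e + 1 < k).
Proof.
move=> He _ pos chik.
have colk : colourable e k := col_mono chik (chi_col He).
have [c0 pc0] : exists c0 : {ffun T -> 'I_k}, proper_col e c0 by apply/existsP.
have [v Hv] := @eq_bigmax T (degree e) pos.
case: (ltnP (max_degree e + 1) k) => kD.
  have kD' : (max_degree e).+2 <= k by rewrite -addn1.
  have crit (c : {ffun T -> 'I_k}) : proper_col e c -> forall S, critical e c S -> #|S| = #|T|.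
    move=> pc S; rewrite /critical =>  /andP[D _]; by rewrite (det_full He pc kD' D) cardsT.
  have E1 : sn e k = #|T|.
    apply: bigmin_const => c pc; apply: bigmin_const => S cS; exact: (crit c pc S cS).
  have E2 : lcs_low e k = #|T|.
    apply: bigmin_const => c pc; apply/eqP; rewrite eqn_leq; apply/andP; split.
      by apply/bigmax_leqP => S cS; rewrite (crit c pc S cS).
    have := @leq_bigmax_cond _ (critical e c) (fun S => #|S|) _ (setT_critical He pc kD').
    by rewrite cardsT.
  by rewrite E1 E2.
have dv : k <= (degree e v).+1 by rewrite -Hv -addn1.
have [c [x [pc W]]] := exists_witness He pc0 dv.
have L1 : lcs_low e k < #|T|.
  exact: leq_ltn_trans (bigmin_le _ _ pc) (lcs_small He W).
have [S cS] := exists_critical e c.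
have L2 : sn e k < #|T|.
  apply: leq_ltn_trans (bigmin_le _ _ pc) _.
  exact: leq_ltn_trans (bigmin_le _ _ cS) (crit_small He W cS).
have nk : (max_degree e + 1 < k) = false by rewrite ltnNge kD.
split; split=> // E.
  by move: L2; rewrite E ltnn.
by move: L1; rewrite E ltnn.
Qed.
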